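(* Let $k\ge1$ be the cache size and let $N\ge k+1$. For the path access graph $P_N$ on $N$ vertices and $\mathcal{A}\in\{\mathrm{LRU},\mathrm{FAR}\}$, \[ \mathcal{I}^{P_N}[\mathrm{FWF},\mathcal{A}]=\left[0,\ 1-\frac{1}{k}\right]. \] Moreover, for $\mathcal{A}=\mathrm{LRU}$ the same equality $\mathcal{I}^{G}[\mathrm{FWF},\mathrm{LRU}]=[0,1-\frac1k]$ holds for any access graph $G$ containing a path on $k+1$ vertices.
   Context: Paging: a cache holds at most $k$ pages and is initially empty. A request to a page in the cache is a hit; otherwise it is a fault, the page is brought into the cache, evicting a page first if the cache is full. $\mathcal{A}(I)$ is the number of faults of $\mathcal{A}$ on request sequence $I$. LRU evicts the least recently requested cached page. FWF (flush-when-full): on a fault with a full cache, it empties the cache and then brings in the requested page. FAR (relative to the access graph): each requested page is marked; on a fault with a full cache, if all cached pages are marked it first unmarks all pages; it then evicts the unmarked cached page whose graph distance to the nearest marked page is largest, ties broken by evicting the least recently requested. Access graph: a graph $G$ whose vertices are the pages; a request sequence respects $G$ if any two consecutive requests are identical or adjacent in $G$; $L(G)$ is the set of such sequences. Relative interval: $\mathrm{Min}_{\mathcal{A},\mathcal{B}}(n,G)=\min\{\mathcal{A}(I)-\mathcal{B}(I): I\in L(G),|I|=n\}$, $\mathrm{Max}_{\mathcal{A},\mathcal{B}}(n,G)$ analogously with max; $\mathrm{Min}^G(\mathcal{A},\mathcal{B})=\liminf_{n\to\infty}\mathrm{Min}_{\mathcal{A},\mathcal{B}}(n,G)/n$, $\mathrm{Max}^G(\mathcal{A},\mathcal{B})=\limsup_{n\to\infty}\mathrm{Max}_{\mathcal{A},\mathcal{B}}(n,G)/n$,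 and $\mathcal{I}^G[\mathcal{A},\mathcal{B}]=[\mathrm{Min}^G(\mathcal{A},\mathcal{B}),\mathrm{Max}^G(\mathcal{A},\mathcal{B})]$. *)

(* Defs.v *)
From HB Require Import structures.
From mathcomp Require Import all_boot all_order all_algebra.
From mathcomp Require Import boolp classical_sets reals constructive_ereal ereal sequences.
Set Implicit Arguments. Unset Strict Implicit. Unset Printing Implicit Defensive.
Import Order.TTheory GRing.Theory Num.Theory.

Section Paging.
Variable T : finType.

(** Access graphs: a relation [e] on the finite set of pages [T]. *)

Definition adj (e : rel T) : rel T := fun x y => (x == y) || e x y.

Definition respects (e : rel T) (s : seq T) : bool := sorted (adj e) s.

Definition ball (e : rel T) (n : nat) (x : T) : {set T} :=
  iter n (fun B => (B :|: [set z | [exists y in B, e y z]])%SET) [set x]%SET.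

(** Graph distance; unreachable vertices get distance #|T|, which exceeds
    every finite distance (acts as infinity). *)
Definition gdist (e : rel T) (x y : T) : nat :=
  find (fun n => y \in ball e n x) (iota 0 #|T|).

(** LRU: cache is a list ordered by recency (most recent first). *)
Definition lru_step (k : nat) (st : seq T * nat) (p : T) : seq T * nat :=
  let: (c, f) := st in
  if p \in c then (p :: rem p c, f)
  else (p :: (if k <= size c then take (size c).-1 c else c), f.+1).

Definition LRU (k : nat) (I : seq T) : nat := (foldl (lru_step k) ([::], 0) I).2.

Definition fwf_step (k : nat) (st : seq T * nat) (p : T) : seq T * nat :=
  let: (c, f) := st in
  if p \in c then (c, f)
  else ((if k <= size c then [:: p] else p :: c), f.+1).

Definition FWF (k : nat) (I : seq T) : nat := (foldl (fwf_step k) ([::], 0) I).2.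

(** FAR: state = (cache ordered by recency, marked set, faults). *)
Definition far_step (e : rel T) (k : nat) (st : seq T * {set T} * nat) (p : T)
  : seq T * {set T} * nat :=
  let: (c, m, f) := st in
  if p \in c then (p :: rem p c, (p |: m)%SET, f)
  else
    let full := k <= size c in
    let m1 := if full && all (fun x => x \in m) c then (@finset.set0 T) else m in
    let m2 := (p |: m1)%SET in
    let dn x := \big[minn/#|T|]_(y in m2) gdist e x y in
    let cands := [seq x <- c | x \notin m2] in
    let dmax := \max_(x <- cands) dn x in
    let victim := last p [seq x <- cands | dn x == dmax] in
    (p :: (if full then rem victim c else c), m2, f.+1).

Definition FAR (e : rel T) (k : nat) (I : seq T) : nat :=
  (foldl (far_step e k) ([::], (@finset.set0 T), 0) I).2.

Variable R : realType.
Local Open Scope ring_scope.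
Local Open Scope ereal_scope.

Definition MinAB (e : rel T) (A B : seq T -> nat) (n : nat) : \bar R :=
  \big[Order.min/+oo]_(s : n.-tuple T | respects e s)
     ((A s)%:R - (B s)%:R : R)%:E.

Definition MaxAB (e : rel T) (A B : seq T -> nat) (n : nat) : \bar R :=
  \big[Order.max/-oo]_(s : n.-tuple T | respects e s)
     ((A s)%:R - (B s)%:R : R)%:E.

(** I^G[A,B] = [Min^G(A,B), Max^G(A,B)], represented by its endpoints. *)
Definition rel_interval (e : rel T) (A B : seq T -> nat) : \bar R * \bar R :=
  (limn_einf (fun n => MinAB e A B n * (n%:R^-1)%:E),
   limn_esup (fun n => MaxAB e A B n * (n%:R^-1)%:E)).

End Paging.

Definition pathN (N : nat) : rel 'I_N := fun i j => (i.+1 == j) || (j.+1 == i).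
Arguments pathN N : clear implicits.

(* Main.v *)
Require Import Defs.
From HB Require Import structures.
From mathcomp Require Import all_boot all_order all_algebra.
From mathcomp Require Import boolp classical_sets reals constructive_ereal ereal sequences.
From mathcomp Require Import zify.
From Stdlib Require Import Lia.
Import Order.TTheory GRing.Theory Num.Theory.
Set Implicit Arguments. Unset Strict Implicit. Unset Printing Implicit Defensive.

Lemma flatten_nseqS (A : Type) (D : seq A) q : flatten (nseq q.+1 D) = flatten (nseq q D) ++ D.
Proof.
elim: q => [|q IH]; first by rewrite /= cats0.
by rewrite (_ : flatten (nseq q.+2 D) = D ++ flatten (nseq q.+1 D)) // {1}IH catA.
Qed.

Section Comb.
Variable T : finType.
Variable k : nat.
Hypothesis k0 : (0 < k)%N.

Definition fwfc (c : seq T) p := if p \in c then c else if k <= size c then [:: p] else p :: c.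

Lemma fwf_stepE c f p : fwf_step k (c, f) p = (fwfc c p, if p \in c then f else f.+1).
Proof. by rewrite /fwf_step /fwfc; case: ifP. Qed.

Lemma fwfc_uniq c p : uniq c -> uniq (fwfc c p).
Proof. by rewrite /fwfc; case: ifP => // pc; case: ifP => //= _ ->; rewrite pc. Qed.

Lemma fwfc_size c p : size c <= k -> size (fwfc c p) <= k.
Proof. by rewrite /fwfc; case: ifP => // pc; case: ifP => //= ks; rewrite ltnNge ks. Qed.

Lemma foldl_cons' (A B : Type) (f : A -> B -> A) z x s : foldl f z (x :: s) = foldl f (f z x) s.
Proof. by []. Qed.

Lemma fwf_fold_inv I : forall c f, uniq c -> size c <= k ->
  uniq (foldl (@fwf_step T k) (c, f) I).1 /\ size (foldl (@fwf_step T k) (c, f) I).1 <= k.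
Proof.
elim: I => [|p I IH] c f Hu Hs //.
rewrite foldl_cons'.
rewrite fwf_stepE; apply: IH; [exact: fwfc_uniq|exact: fwfc_size].
Qed.

Section Sim.
Variables (S : Type) (stepA : S -> T -> S) (cnt : S -> nat) (Inv : seq T -> S -> Prop).
Hypothesis Hstep : forall cF sA p, Inv cF sA -> uniq cF -> size cF <= k ->
  [/\ Inv (fwfc cF p) (stepA sA p),
      p \in cF -> cnt (stepA sA p) = cnt sA,
      cnt (stepA sA p) <= (cnt sA).+1,
      cnt sA <= cnt (stepA sA p)
    & p \notin cF -> k <= size cF -> cnt (stepA sA p) = (cnt sA).+1].

Lemma sim_fold I : forall cF fF sA n0, Inv cF sA -> uniq cF -> size cF <= k ->
  cnt sA <= fF -> k * fF <= k * cnt sA + (k - 1) * n0 + size cF ->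
  cnt (foldl stepA sA I) <= (foldl (fwf_step k) (cF, fF) I).2 /\
  k * (foldl (fwf_step k) (cF, fF) I).2 <=
     k * cnt (foldl stepA sA I) + (k - 1) * (n0 + size I) + size (foldl (fwf_step k) (cF, fF) I).1.
Proof.
elim: I => [|p I IH] cF fF sA n0 HI Hu Hs Hc Hk; first by rewrite /= addn0.
rewrite !foldl_cons' fwf_stepE /=.
have [Hi Hin Hle Hge Hfl] := Hstep p HI Hu Hs.
rewrite -addSnnS.
apply: IH => //; [exact: fwfc_uniq|exact: fwfc_size| |].
- by case: (boolP (p \in cF)) => pc; [rewrite Hin|lia].
- rewrite /fwfc; case: (boolP (p \in cF)) => pc.
    by rewrite Hin //; lia.
  case: ifP => ks.
    rewrite Hfl // /=; nia.
  move: ks => /negbT; rewrite -ltnNge /= => ks.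
  nia.
Qed.

Lemma sim_main I s0 : Inv [::] s0 -> cnt s0 = 0 ->
  cnt (foldl stepA s0 I) <= FWF k I /\
  k * FWF k I <= k * cnt (foldl stepA s0 I) + (k - 1) * size I + k.
Proof.
move=> H0 c0.
have [] := @sim_fold I [::] 0 s0 0 H0 (erefl _) (leq0n _) _ _; rewrite ?c0 ?muln0 //.
rewrite /FWF => -> h; split => //; apply: leq_trans h _.
rewrite add0n leq_add2l; by have [] := @fwf_fold_inv I [::] 0 (erefl _) (leq0n _).
Qed.
End Sim.

Lemma take_rem_in (s : seq T) d p : p \in take d s -> rem p (take d s) = take d.-1 (rem p s).
Proof.
elim: s d => [|y t IH] [|d] //=.
case: eqP => [->|yp] //=.
rewrite inE eq_sym; move/eqP: yp => /negbTE -> /= pt.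
case: d IH pt => [|d] IH pt; first by rewrite take0 in pt.
by rewrite IH.
Qed.

Lemma take_rem_notin (s : seq T) d p : p \notin take d s -> take d (rem p s) = take d s.
Proof.
elim: s d => [|y t IH] [|d] //=; first by rewrite take0.
rewrite inE negb_or => /andP[py pt].
by rewrite eq_sym (negbTE py) /= IH.
Qed.

Definition InvL (cF : seq T) (sL : seq T * nat) :=
  [/\ uniq sL.1, size sL.1 <= k, size cF <= size sL.1 & {subset cF <= take (size cF) sL.1}].

Lemma lru_sim cF sL p : InvL cF sL -> uniq cF -> size cF <= k ->
  [/\ InvL (fwfc cF p) (lru_step k sL p),
      p \in cF -> (lru_step k sL p).2 = sL.2,
      (lru_step k sL p).2 <= sL.2.+1,
      sL.2 <= (lru_step k sL p).2
    & p \notin cF -> k <= size cF -> (lru_step k sL p).2 = sL.2.+1].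
Proof.
case: sL => cL f [/= uL sL dL sub] uF sF.
set d := size cF in dL sub *.
have [_ eqF] := uniq_min_size uF sub (eq_leq (size_takel dL)).
rewrite /fwfc /lru_step.
case: (boolP (p \in cF)) => pF.
  have pL : p \in cL by rewrite -(cat_take_drop d cL) mem_cat -eqF pF.
  rewrite pL /=; split => //.
  have d0 : 0 < d by rewrite /d; case: (cF) pF.
  have szr : size (rem p cL) = (size cL).-1 by rewrite size_rem.
  split => /=.
  - by rewrite rem_uniq // andbT mem_rem_uniqF.
  - by rewrite szr prednK // (leq_trans d0 dL).
  - by rewrite szr prednK // (leq_trans d0 dL).
  - move=> x xF; rewrite -/d -(prednK d0) /= inE.
    case: eqP => //= xp.
    have pT : p \in take d cL by rewrite -eqF.
    rewrite -take_rem_in // (mem_rem_uniq _ (take_uniq _ uL)) inE.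
    by apply/andP; split; [apply/eqP|rewrite -eqF].
have pT : p \notin take d cL by rewrite -eqF.
case: (boolP (k <= d)) => kd.
  have dk : d = k by apply/eqP; rewrite eqn_leq sF kd.
  have szL : size cL = k by apply/eqP; rewrite eqn_leq sL -dk dL.
  have pL : p \notin cL by move: pT; rewrite -{2}(take_size cL) szL dk.
  rewrite (negbTE pL) szL leqnn /=; split => //.
  split => /=.
  - by rewrite take_uniq // andbT; apply: contra pL; apply: mem_take.
  - by rewrite size_takel ?szL ?leq_pred // prednK.
  - by rewrite size_takel ?szL ?leq_pred // prednK.
  - by move=> x; rewrite !inE => ->.
try rewrite (negbTE kd).
case: (boolP (p \in cL)) => pL /=.
  have dlt : d < size cL.
    rewrite ltnNge; apply: contra pT => ?; by rewrite take_oversize.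
  have szr : size (rem p cL) = (size cL).-1 by rewrite size_rem.
  split => //; split => /=.
  - by rewrite rem_uniq // andbT mem_rem_uniqF.
  - by rewrite szr prednK // (leq_ltn_trans _ dlt).
  - by rewrite szr prednK // (leq_ltn_trans _ dlt).
  - move=> x; rewrite !inE take_rem_notin //; case/orP => [->//|xF].
    by rewrite sub ?orbT.
split => //; split => /=.
- case: ifP => _; last by rewrite pL.
  by rewrite take_uniq // andbT; apply: contra pL; apply: mem_take.
- case: ifP => kL; last by rewrite ltnNge kL.
  by rewrite size_takel ?leq_pred // prednK // (leq_trans k0 kL).
- case: ifP => kL.
    rewrite size_takel ?leq_pred // prednK ?(leq_trans k0 kL) //.
    rewrite -/d; lia.
  rewrite -/d; lia.
- move=> x; rewrite !inE; case/orP => [->//|xF].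
  case: ifP => kL.
    have szL : size cL = k by apply/eqP; rewrite eqn_leq sL kL.
    rewrite take_takel ?sub ?orbT //.
    rewrite szL -/d; lia.
  by rewrite sub ?orbT.
Qed.


Lemma lru_bounds (I : seq T) : LRU k I <= FWF k I /\ k * FWF k I <= k * LRU k I + (k - 1) * size I + k.
Proof.
have := @sim_main _ (lru_step k) snd InvL lru_sim I ([::], 0).
by apply => //; split.
Qed.

Lemma bigmax_attained (dn : T -> nat) (cs : seq T) : cs != [::] ->
  exists2 x, x \in cs & dn x = \max_(y <- cs) dn y.
Proof.
elim: cs => [|a l IH] //= _.
rewrite big_cons.
case: l IH => [|b l] IH.
  by exists a; rewrite ?mem_head // big_nil maxn0.
have [x xl xe] := IH isT.
case: (leqP (dn a) (\max_(y <- b :: l) dn y)) => h.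
  by exists x; [rewrite inE xl orbT | rewrite ?(maxn_idPr h)].
by exists a; rewrite ?mem_head // (maxn_idPl (ltnW h)).
Qed.

Lemma last_filter_mem (dn : T -> nat) (cs : seq T) p : cs != [::] ->
  last p [seq x <- cs | dn x == \max_(y <- cs) dn y] \in cs.
Proof.
move=> /(bigmax_attained dn)[x xc xe].
have : has (fun x => dn x == \max_(y <- cs) dn y) cs by apply/hasP; exists x => //; apply/eqP.
rewrite has_filter; case E : [seq _ <- cs | _] => [|y L] // _.
have : last y L \in [seq x <- cs | dn x == \max_(y <- cs) dn y] by rewrite E /= mem_last.
by rewrite mem_filter => /andP[].
Qed.

Variable e : rel T.

Lemma far_fault (c : seq T) (m : {set T}) f p : p \notin c ->
  exists v, far_step e k (c, m, f) p =
    (p :: (if k <= size c then rem v c else c),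
     (p |: (if (k <= size c) && all (fun x => x \in m) c then (@finset.set0 T) else m))%SET, f.+1) /\
    (has (fun x => x \notin (p |: (if (k <= size c) && all (fun x => x \in m) c then (@finset.set0 T) else m))%SET) c ->
     v \in c /\ v \notin (p |: (if (k <= size c) && all (fun x => x \in m) c then (@finset.set0 T) else m))%SET).
Proof.
move=> pc; rewrite /far_step (negbTE pc).
eexists; split; first reflexivity.
set m2 := (p |: _)%SET.
rewrite has_filter => hne.
have := last_filter_mem (fun x => \big[minn/#|T|]_(y in m2) gdist e x y) p hne.
by rewrite mem_filter => /andP[].
Qed.


Definition InvF (cF : seq T) (sA : seq T * {set T} * nat) :=
  [/\ uniq sA.1.1, size sA.1.1 <= k, sA.1.2 = [set x | x \in cF]%SET & {subset cF <= sA.1.1}].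

Lemma far_hit c m f p : p \in c -> far_step e k (c, m, f) p = (p :: rem p c, (p |: m)%SET, f).
Proof. by move=> pc; rewrite /far_step pc. Qed.

Lemma far_sim cF sA p : InvF cF sA -> uniq cF -> size cF <= k ->
  [/\ InvF (fwfc cF p) (far_step e k sA p),
      p \in cF -> (far_step e k sA p).2 = sA.2,
      (far_step e k sA p).2 <= sA.2.+1,
      sA.2 <= (far_step e k sA p).2
    & p \notin cF -> k <= size cF -> (far_step e k sA p).2 = sA.2.+1].
Proof.
case: sA => [[c m] f] [uc sc mE sub] uF sF.
rewrite /= in uc sc mE sub; subst m.
set M := [set x | x \in cF]%SET.
rewrite /fwfc.
case: (boolP (p \in cF)) => pF.
  have pc : p \in c by apply: sub.
  rewrite far_hit //; split => //=; split => //=.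
  - by rewrite rem_uniq // andbT mem_rem_uniqF.
  - rewrite size_rem // prednK //; by case: (c) pc.
  - by apply/setP => x; rewrite !inE; case: eqP => // ->; rewrite pF.
  - move=> x xF; rewrite inE (mem_rem_uniq _ uc) inE.
    by case: eqP => //= _; rewrite sub.
case: (boolP (p \in c)) => pc.
  have kF : ~~ (k <= size cF).
    apply/negP => kF.
    have [_ eqc] := uniq_min_size uF sub (leq_trans sc kF).
    by move: pF; rewrite eqc pc.
  rewrite (negbTE kF) far_hit //; split => //=; split => //=.
  - by rewrite rem_uniq // andbT mem_rem_uniqF.
  - rewrite size_rem // prednK //; by case: (c) pc.
  - by apply/setP => x; rewrite !inE.
  - move=> x; rewrite !inE (mem_rem_uniq _ uc) inE.
    by case: eqP => //= _ xF; rewrite sub.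
have [v [-> Hv]] := far_fault M f pc.
case: (boolP (k <= size cF)) => kF.
  have [szc eqc] := uniq_min_size uF sub (leq_trans sc kF).
  have kc : k <= size c by rewrite -szc.
  have allm : all (fun x => x \in M) c by apply/allP => x; rewrite -eqc inE.
  rewrite kc allm /= in Hv *.
  have hh : has (fun x => x \notin (p |: (@finset.set0 T))%SET) c.
    case: (c) kc pc => [|y t]; first by rewrite leqNgt k0.
    move=> _; rewrite inE negb_or => /andP[py _] /=.
    by rewrite !inE eq_sym (negbTE py).
  have [vc vm] := Hv hh.
  split => //=; split => //=.
  - by rewrite rem_uniq // andbT; apply: contra pc; apply: mem_rem.
  - by rewrite size_rem // prednK // (leq_trans k0 kc).
  - by apply/setP => x; rewrite !inE orbF.
  - by move=> x; rewrite inE => /eqP ->; rewrite mem_head.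
case: (boolP (k <= size c)) => kc.
  have nall : ~~ all (fun x => x \in M) c.
    apply/negP => /allP allm.
    have : size c <= size cF.
      apply: uniq_leq_size => // x xc; by move: (allm x xc); rewrite inE.
    move: kF kc; rewrite -ltnNge; lia.
  rewrite kc (negbTE nall) /= in Hv *.
  have hh : has (fun x => x \notin (p |: M)%SET) c.
    move: (nall) => /allPn [x xc xM]; apply/hasP; exists x => //.
    rewrite !inE negb_or; apply/andP; split; last by move: xM; rewrite inE.
    by apply: contra pc => /eqP <-.
  have [vc vm] := Hv hh.
  split => //=; split => //=.
  - by rewrite rem_uniq // andbT; apply: contra pc; apply: mem_rem.
  - by rewrite size_rem // prednK // (leq_trans k0 kc).
  - by apply/setP => x; rewrite !inE.
  - move=> x; rewrite !in_cons (mem_rem_uniq _ uc) inE.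
    case: eqP => //= _ xF; apply/andP; split; last exact: sub.
    apply/eqP => xv; move: vm; rewrite -xv !inE xF orbT.
    by [].
rewrite (negbTE kc) /= in Hv *.
split => //=; split => //=.
- by rewrite pc uc.
- by move: kc; rewrite -ltnNge.
- by apply/setP => x; rewrite !inE.
- by move=> x; rewrite !inE; case/orP => [->//|/sub ->]; rewrite orbT.
Qed.

Lemma far_bounds (I : seq T) : FAR e k I <= FWF k I /\ k * FWF k I <= k * FAR e k I + (k - 1) * size I + k.
Proof.
have := @sim_main _ (far_step e k) snd InvF far_sim I ([::], (@finset.set0 T), 0).
apply => //; split => //=; by apply/setP => x; rewrite !inE.
Qed.


Lemma fwf_fill (b c : seq T) f : size c + size b <= k -> uniq (b ++ c) ->
  foldl (fwf_step k) (c, f) b = (rev b ++ c, f + size b).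
Proof.
elim: b c f => [|p b IH] c f; first by move=> _ _ /=; rewrite addn0.
rewrite foldl_cons' fwf_stepE [size _]/= addnS => sz /andP[pbc ubc].
have pc : p \notin c by apply: contra pbc; rewrite mem_cat orbC => ->.
rewrite /fwfc (negbTE pc) ifF; last by apply/negbTE; rewrite -ltnNge (leq_ltn_trans (leq_addr _ _) sz).
rewrite IH /=.
- by rewrite rev_cons cat_rcons addSnnS.
- by rewrite addSn.
- by rewrite -cat1s uniq_catCA cat1s /=; apply/andP.
Qed.

Lemma lru_fill (b c : seq T) f : size c + size b <= k -> uniq (b ++ c) ->
  foldl (lru_step k) (c, f) b = (rev b ++ c, f + size b).
Proof.
elim: b c f => [|p b IH] c f; first by move=> _ _ /=; rewrite addn0.
rewrite foldl_cons' [size _]/= addnS => sz /andP[pbc ubc].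
have pc : p \notin c by apply: contra pbc; rewrite mem_cat orbC => ->.
rewrite /lru_step (negbTE pc) ifF; last by apply/negbTE; rewrite -ltnNge (leq_ltn_trans (leq_addr _ _) sz).
rewrite -/(lru_step k) IH.
- by rewrite rev_cons cat_rcons addSnnS.
- by rewrite addSn.
- by rewrite -cat1s uniq_catCA cat1s /=; apply/andP.
Qed.

Lemma rem_cat_notin (a b : seq T) p : p \notin a -> rem p (a ++ b) = a ++ rem p b.
Proof.
elim: a => [|x a IH] //=; rewrite inE negb_or => /andP[px pa].
by rewrite eq_sym (negbTE px) IH.
Qed.

Lemma lru_hits (w a : seq T) f : uniq (a ++ w) ->
  foldl (lru_step k) (a ++ w, f) w = (rev w ++ a, f).
Proof.
elim: w a => [|p w IH] a; first by rewrite cats0.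
move=> u; rewrite foldl_cons' /lru_step mem_cat mem_head orbT -/(lru_step k).
have pa : p \notin a.
  by move: u; rewrite uniq_catC /= mem_cat negb_or => /andP[/andP[]].
have -> : rem p (a ++ p :: w) = a ++ w.
  by rewrite rem_cat_notin //= eqxx.
rewrite -cat1s catA IH; first by rewrite rev_cons cat_rcons.
by rewrite -catA uniq_catCA.
Qed.

Lemma lru_full (c : seq T) f p : p \notin c -> size c = k ->
  lru_step k (c, f) p = (p :: take k.-1 c, f.+1).
Proof. by move=> pc sc; rewrite /lru_step (negbTE pc) sc leqnn. Qed.

Lemma fold_mono (S : Type) (step : S -> T -> S) (cnt : S -> nat) :
  (forall s p, cnt s <= cnt (step s p) <= (cnt s).+1) ->
  forall I s, cnt s <= cnt (foldl step s I) <= cnt s + size I.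
Proof.
move=> H; elim => [|p I IH] s /=; first by rewrite addn0 leqnn.
have /andP[h1 h2] := H s p; have /andP[h3 h4] := IH (step s p).
apply/andP; split; first exact: leq_trans h1 h3.
by apply: leq_trans h4 _; rewrite addnS -addSn leq_add2r.
Qed.

Lemma fwf_cnt (s : seq T * nat) p : s.2 <= (fwf_step k s p).2 <= s.2.+1.
Proof. by case: s => c f; rewrite fwf_stepE /=; case: ifP => _; rewrite ?leqnn ?leqnSn. Qed.

Lemma lru_cnt (s : seq T * nat) p : s.2 <= (lru_step k s p).2 <= s.2.+1.
Proof. by case: s => c f; rewrite /lru_step; case: ifP => _ /=; rewrite ?leqnn ?leqnSn. Qed.

Lemma far_cnt (s : seq T * {set T} * nat) p : s.2 <= (far_step e k s p).2 <= s.2.+1.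
Proof.
case: s => [[c m] f]; case: (boolP (p \in c)) => pc.
  by rewrite far_hit //= leqnn leqnSn.
by have [v [-> _]] := far_fault m f pc; rewrite /= leqnSn leqnn.
Qed.


Lemma fwf_block (b c : seq T) f p : size b = k.-1 -> uniq (p :: b) -> p \notin c -> size c = k ->
  foldl (fwf_step k) (c, f) (p :: b) = (rev (p :: b), f + k).
Proof.
move=> sb ub pc sc.
rewrite foldl_cons' fwf_stepE /fwfc (negbTE pc) sc leqnn fwf_fill.
- by rewrite rev_cons -cats1 addSnnS sb prednK.
- by rewrite /= sb add1n prednK.
- by rewrite uniq_catC.
Qed.

Lemma FWF_cat (a b : seq T) : FWF k a <= FWF k (a ++ b).
Proof.
rewrite /FWF foldl_cat.
by have /andP[] := fold_mono fwf_cnt b (foldl (fwf_step k) ([::], 0) a).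
Qed.

Lemma LRU_cat (a b : seq T) : LRU k (a ++ b) <= LRU k a + size b.
Proof.
rewrite /LRU foldl_cat.
by have /andP[] := fold_mono lru_cnt b (foldl (lru_step k) ([::], 0) a).
Qed.

Lemma FAR_cat (a b : seq T) : FAR e k (a ++ b) <= FAR e k a + size b.
Proof.
rewrite /FAR foldl_cat.
by have /andP[] := fold_mono far_cnt b (foldl (far_step e k) ([::], (@finset.set0 T), 0) a).
Qed.

Lemma far_hits (w a : seq T) m f : uniq (a ++ w) ->
  exists m', foldl (far_step e k) (a ++ w, m, f) w = (rev w ++ a, m', f) /\
     (forall x, x \in m -> x \in m') /\ (forall x, x \in w -> x \in m').
Proof.
elim: w a m => [|p w IH] a m; first by move=> _; exists m; rewrite cats0.
move=> u; rewrite foldl_cons' far_hit ?mem_cat ?mem_head ?orbT //.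
have pa : p \notin a.
  by move: u; rewrite uniq_catC /= mem_cat negb_or => /andP[/andP[]].
have -> : rem p (a ++ p :: w) = a ++ w.
  by rewrite rem_cat_notin //= eqxx.
rewrite -cat1s catA.
have u2 : uniq (([:: p] ++ a) ++ w) by rewrite -catA uniq_catCA.
have [m' [-> [h1 h2]]] := IH ([:: p] ++ a) (p |: m)%SET u2.
exists m'; split; first by rewrite rev_cons cat_rcons.
split; first by move=> x xm; apply: h1; rewrite !inE xm orbT.
by move=> x; rewrite inE => /orP[/eqP ->|/h2 //]; apply: h1; rewrite !inE eqxx.
Qed.

Lemma far_fill (b c : seq T) m f : size c + size b <= k -> uniq (b ++ c) ->
  exists m', foldl (far_step e k) (c, m, f) b = (rev b ++ c, m', f + size b) /\
    (forall x, x \in m -> x \in m') /\ (forall x, x \in b -> x \in m').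
Proof.
elim: b c m f => [|p b IH] c m f; first by move=> _ _; exists m; rewrite /= addn0.
rewrite foldl_cons' [size _]/= addnS => sz /andP[pbc ubc].
have pc : p \notin c by apply: contra pbc; rewrite mem_cat orbC => ->.
have [v [-> _]] := far_fault m f pc.
have kc : (k <= size c) = false by apply/negbTE; rewrite -ltnNge (leq_ltn_trans (leq_addr _ _) sz).
rewrite kc /=.
have s2 : size (p :: c) + size b <= k by rewrite /= addSn.
have u2 : uniq (b ++ p :: c) by rewrite -cat1s uniq_catCA cat1s /=; apply/andP.
have [m' [-> [h1 h2]]] := IH (p :: c) (p |: m)%SET f.+1 s2 u2.
exists m'; split; first by rewrite rev_cons cat_rcons addSnnS.
split; first by move=> x xm; apply: h1; rewrite !inE xm orbT.
by move=> x; rewrite inE => /orP[/eqP ->|/h2 //]; apply: h1; rewrite !inE eqxx.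
Qed.

Lemma gdist_le x z : gdist e x z <= #|T|.
Proof. by rewrite /gdist (leq_trans (find_size _ _)) // size_iota. Qed.

Lemma far_victim (c : seq T) (m : {set T}) (f : nat) p w : uniq c -> size c = k -> (forall x, x \in c -> x \in m) ->
  p \notin c -> w \in c -> (forall x, x \in c -> x != w -> gdist e x p < gdist e w p) ->
  far_step e k (c, m, f) p = (p :: rem w c, [set p]%SET, f.+1).
Proof.
move=> uc sc cm pc wc hd.
rewrite /far_step (negbTE pc) sc leqnn /=.
have -> : all (fun x => x \in m) c by apply/allP.
rewrite /= finset.setU0.
have dnE : forall x, \big[minn/#|T|]_(y in [set p]%SET) gdist e x y = gdist e x p.
  move=> x; rewrite -big_filter.
  have -> : [seq i <- index_enum T | i \in [set p]%SET] = [:: p].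
    rewrite (eq_filter (a2 := pred1 p)); last by move=> z; rewrite inE.
    by rewrite filter_pred1_uniq // ?index_enum_uniq // mem_index_enum.
  by rewrite big_cons big_nil; apply/minn_idPl; apply: gdist_le.
have -> : [seq x <- c | x \notin [set p]%SET] = c.
  apply/all_filterP/allP => x xc; rewrite inE; apply: contra pc => /eqP <-; exact: xc.
set D := \max_(_ <- _) _.
have DE : D = gdist e w p.
  rewrite /D; under eq_bigr => x _ do rewrite dnE.
  apply/eqP; rewrite eqn_leq; apply/andP; split.
    apply/bigmax_leqP_seq => x xc _; case: (eqVneq x w) => [->//|xw].
    exact: ltnW (hd x xc xw).
  exact: (@leq_bigmax_seq _ c xpredT (fun x => gdist e x p) w).
have -> : [seq x <- c | \big[minn/#|T|]_(y in [set p]%SET) gdist e x y == D] = [:: w].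
  rewrite (eq_in_filter (a2 := pred1 w)); first exact: filter_pred1_uniq.
  move=> x xc /=; rewrite dnE DE; case: (eqVneq x w) => [->|xw]; first by rewrite eqxx.
  by rewrite (ltn_eqF (hd x xc xw)).
by [].
Qed.

Lemma fwf_nseq_hit x n : forall (c : seq T) f, x \in c -> foldl (fwf_step k) (c, f) (nseq n x) = (c, f).
Proof.
elim: n => [|n IH] c f xc //.
by rewrite (_ : nseq n.+1 x = x :: nseq n x) // foldl_cons' fwf_stepE /fwfc xc IH.
Qed.

Lemma const_seq (A : seq T -> nat) x : (forall s, 1 <= A (x :: s)) ->
  forall n, exists I : seq T, [/\ size I = n, sorted (adj e) I & FWF k I <= A I].
Proof.
move=> HA [|n]; first by exists [::].
exists (x :: nseq n x); split; first by rewrite /= size_nseq.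
  rewrite /=; elim: n => [|n IH] //=.
  by rewrite /adj eqxx IH.
apply: leq_trans (HA _).
rewrite /FWF foldl_cons' fwf_stepE /fwfc /= fwf_nseq_hit //.
by case: ifP; rewrite inE.
Qed.

Lemma LRU_ge1 (x : T) s : 1 <= LRU k (x :: s).
Proof.
rewrite /LRU foldl_cons' /lru_step in_nil -/(lru_step k).
by have /andP[] := fold_mono lru_cnt s (x :: (if k <= size (@nil T) then take (size (@nil T)).-1 [::] else [::]), 1).
Qed.

Lemma FAR_ge1 (x : T) s : 1 <= FAR e k (x :: s).
Proof.
rewrite /FAR foldl_cons'.
have xn : x \notin (@nil T) by rewrite in_nil.
have [v [-> _]] := far_fault (@finset.set0 T) 0 xn.
move: (x :: _) (x |: _)%SET => c' m'.
by have /andP[] := fold_mono far_cnt s (c', m', 1).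
Qed.

Section Lower.
Variables (x0 y : T) (u : seq T).
Hypothesis su : size u = k.-1.
Hypothesis us : uniq (x0 :: rcons u y).

Definition Eb := x0 :: u.
Definition Ob := y :: rev u.
Definition Db := Ob ++ Eb.
Definition Xs q := Eb ++ flatten (nseq q Db).

Lemma us_facts : [/\ x0 \notin u, x0 != y, y \notin u & uniq u].
Proof.
move: us => /= /andP[]; rewrite mem_rcons inE negb_or rcons_uniq => /andP[xy xu] /andP[yu uu].
by split.
Qed.

Lemma size_Xs q : size (Xs q) = k + q * (2 * k).
Proof.
rewrite /Xs size_cat /= su prednK //; congr (_ + _).
elim: q => [|q IH] //=.
by rewrite size_cat IH /Db size_cat /= size_rev su prednK //; lia.
Qed.

Lemma fwf_Xs q : foldl (fwf_step k) ([::], 0) (Xs q) = (rev Eb, k + q * (2 * k)).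
Proof.
have [x0u x0y yu uu] := us_facts.
rewrite /Xs foldl_cat fwf_fill ?cats0; last 2 first.
- by rewrite /= su prednK.
- by rewrite /= x0u.
rewrite add0n /= su prednK //.
suff H : forall q f, foldl (fwf_step k) (rev Eb, f) (flatten (nseq q Db)) = (rev Eb, f + q * (2 * k)) by apply: H.
elim => [|{}q IH] f; first by rewrite addn0.
rewrite (_ : flatten (nseq q.+1 Db) = Db ++ flatten (nseq q Db)) // foldl_cat /Db foldl_cat fwf_block //; first last.
- by rewrite size_rev /= su prednK.
- by rewrite mem_rev inE negb_or eq_sym x0y.
- by rewrite /= mem_rev yu rev_uniq.
- by rewrite size_rev.
rewrite fwf_block //; first last.
- by rewrite size_rev /= size_rev su prednK.
- by rewrite mem_rev inE negb_or x0y mem_rev.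
- by rewrite /= x0u.
rewrite IH; congr (_, _); rewrite mulSn; lia.
Qed.

Lemma FWF_Xs q : FWF k (Xs q) = k + q * (2 * k).
Proof. by rewrite /FWF fwf_Xs. Qed.

Lemma lru_Xs q : foldl (lru_step k) ([::], 0) (Xs q) = (rev u ++ [:: x0], k + 2 * q).
Proof.
have [x0u x0y yu uu] := us_facts.
rewrite /Xs foldl_cat lru_fill ?cats0; last 2 first.
- by rewrite /= su prednK.
- by rewrite /= x0u.
rewrite add0n /= su prednK // rev_cons -cats1.
suff H : forall q f, foldl (lru_step k) (rev u ++ [:: x0], f) (flatten (nseq q Db)) = (rev u ++ [:: x0], f + 2 * q) by apply: H.
elim => [|{}q IH] f; first by rewrite addn0.
rewrite (_ : flatten (nseq q.+1 Db) = Db ++ flatten (nseq q Db)) // foldl_cat /Db foldl_cat /Ob foldl_cons' lru_full; first last.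
- by rewrite size_cat size_rev su /= addn1 prednK.
- by rewrite mem_cat mem_rev negb_or yu inE eq_sym x0y.
rewrite -su take_size_cat ?size_rev // -cat1s lru_hits; last first.
  by rewrite /= mem_rev yu rev_uniq.
rewrite revK /Eb foldl_cons' lru_full; first last.
- by rewrite size_cat su /= addn1 prednK.
- by rewrite mem_cat negb_or x0u inE x0y.
rewrite take_size_cat // -cat1s lru_hits; last by rewrite /= x0u.
by rewrite IH; congr (_, _); lia.
Qed.

Lemma LRU_Xs q : LRU k (Xs q) = k + 2 * q.
Proof. by rewrite /LRU lru_Xs. Qed.


Hypothesis esym : symmetric e.
Hypothesis es : sorted e (x0 :: rcons u y).

Lemma Xs_path q : path (adj e) x0 (Xs q).
Proof.
have sub : subrel e (adj e) by move=> a b h; rewrite /adj h orbT.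
have es' : path e y (rcons (rev u) x0).
  have := rev_path e x0 (rcons u y); rewrite last_rcons belast_rcons rev_cons => ->.
  have H : (fun z => e^~ z) =2 e by move=> a b; exact: esym.
  by rewrite (eq_path H).
move: es => /=; rewrite rcons_path => /andP[p1 e1].
move: es'; rewrite rcons_path => /andP[p2 e2].
have pD : forall w, adj e w y -> path (adj e) w Db /\ last w Db = last x0 u.
  move=> w hw; rewrite /Db cat_path last_cat /Ob /Eb /= hw.
  rewrite (sub_path sub p2) /= /adj e2 orbT /=.
  by rewrite (sub_path sub p1).
have pQ : forall q, path (adj e) (last x0 u) (flatten (nseq q Db)).
  elim => [|{}q IH] //.
  rewrite (_ : flatten (nseq q.+1 Db) = Db ++ flatten (nseq q Db)) // cat_path.
  have [h1 h2] := pD (last x0 u) (sub _ _ e1).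
  by rewrite h1 h2 IH.
rewrite /Xs cat_path /Eb /= /adj eqxx /= (sub_path sub p1).
exact: pQ.
Qed.

Lemma lower_gen (A : seq T -> nat) :
  (forall a b, A (a ++ b) <= A a + size b) -> (forall q, A (Xs q) = k + 2 * q) ->
  forall n, k <= n -> exists I : seq T,
    [/\ size I = n, sorted (adj e) I & (k - 1) * n + k * A I <= k * FWF k I + 5 * k * k].
Proof.
move=> Acat AX n kn.
set q := (n - k) %/ (2 * k); set r := (n - k) %% (2 * k).
have hn : n = k + q * (2 * k) + r by rewrite /q /r -addnA -divn_eq subnKC.
have hr : r < 2 * k by rewrite /r ltn_mod muln_gt0 k0.
have sD : size Db = 2 * k by rewrite /Db size_cat /= size_rev su prednK // addnn -mul2n.
exists (Xs q ++ take r Db); split.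
- by rewrite size_cat size_Xs size_takel ?sD ?(ltnW hr).
- have := Xs_path q.+1.
  rewrite /Xs (_ : flatten (nseq q.+1 Db) = flatten (nseq q Db) ++ Db); last first.
    exact: flatten_nseqS.
  rewrite catA cat_path => /andP[h1 h2].
  apply: (path_sorted (x := x0)); rewrite cat_path h1 /=; exact: take_path.
- have h1 := FWF_cat (Xs q) (take r Db).
  have h2 := Acat (Xs q) (take r Db).
  rewrite FWF_Xs in h1; rewrite AX size_takel ?sD ?(ltnW hr) in h2.
  rewrite hn; move: h1 h2 hr; clear.
  case: k => [|k'] //= h1 h2 hr; rewrite subSS subn0.
  nia.
  by [].
Qed.

End Lower.

End Comb.


Lemma ball_path N n (i z : 'I_N) :
  (z \in Defs.ball (pathN N) n i) = (i <= z + n) && (z <= i + n).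
Proof.
elim: n z => [|n IH] z.
  rewrite /Defs.ball /= inE !addn0 -eqn_leq eq_sym.
  by [].
rewrite /Defs.ball iterS -/(Defs.ball (pathN N) n i) !inE IH.
apply/idP/idP.
  case/orP => [/andP[h1 h2]|/existsP[y /andP[]]]; first by apply/andP; split; lia.
  rewrite IH /pathN => /andP[h1 h2] /orP[/eqP h|/eqP h]; apply/andP; split; lia.
move=> /andP[h1 h2].
case: (boolP ((i <= z + n) && (z <= i + n))) => // H; apply/orP; right.
apply/existsP.
case: (ltnP (z + n) i) => hz.
  have yN : z.+1 < N by apply: leq_ltn_trans (ltn_ord i); lia.
  exists (Ordinal yN); rewrite IH /pathN /=; apply/andP; split; first by apply/andP; split; lia.
  by rewrite eqxx orbT.
have z0 : 0 < z by move: H; rewrite hz /=; lia.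
have yN : z.-1 < N by apply: leq_ltn_trans (ltn_ord z); lia.
exists (Ordinal yN); rewrite IH /pathN /=; apply/andP; split; first by apply/andP; split; move: H; rewrite hz /=; lia.
by rewrite prednK // eqxx.
Qed.

Lemma find_iota_thr (P : pred nat) d : (forall n, P n = (d <= n)) ->
  forall m a, a <= d < a + m -> find P (iota a m) = d - a.
Proof.
move=> HP; elim => [|m IH] a; first by rewrite addn0; lia.
move=> h /=; rewrite HP.
case: (ltnP a d) => ad.
  by rewrite IH; lia.
lia.
Qed.

Lemma gdist_path N (i j : 'I_N) : gdist (pathN N) i j = (i - j) + (j - i).
Proof.
rewrite /gdist card_ord (@find_iota_thr _ ((i - j) + (j - i))) ?subn0 //.
  move=> n; rewrite ball_path.
  apply/idP/idP; [move=> /andP[h1 h2]; lia | move=> h; apply/andP; split; lia].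
have := ltn_ord i; have := ltn_ord j; lia.
Qed.

Section PathFar.
Variables (N' k : nat).
Hypothesis k0 : 0 < k.
Hypothesis kN : k <= N'.

Local Notation T := 'I_N'.+1.
Definition vv (i : nat) : T := inord i.
Definition x0p := vv 0.
Definition yp := vv k.
Definition up := map vv (iota 1 k.-1).

Lemma vvK i : i <= N' -> (vv i : nat) = i.
Proof. by move=> h; rewrite /vv inordK. Qed.

Lemma memup x : x \in up -> exists2 i, 0 < i < k & x = vv i.
Proof. by case/mapP => i; rewrite mem_iota => h ->; exists i => //; lia. Qed.

Lemma su_p : size up = k.-1.
Proof. by rewrite size_map size_iota. Qed.

Lemma s_p : x0p :: rcons up yp = map vv (iota 0 k.+1).
Proof.
rewrite /x0p /yp /up -cats1 (_ : k.+1 = 1 + (k.-1 + 1)); last by lia.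
by rewrite iotaD iotaD map_cat map_cat /= add1n prednK.
Qed.

Lemma us_p : uniq (x0p :: rcons up yp).
Proof.
rewrite s_p map_inj_in_uniq ?iota_uniq // => a b; rewrite !mem_iota => ha hb h.
by rewrite -(vvK (i := a)) ?h ?vvK //; lia.
Qed.

Lemma es_p : sorted (pathN N'.+1) (x0p :: rcons up yp).
Proof.
rewrite s_p.
suff H : forall m a, a + m <= N' -> path (pathN N'.+1) (vv a) (map vv (iota a.+1 m)).
  by apply: H; lia.
elim => [|m IH] a h //=.
rewrite IH; last by lia.
by rewrite /pathN !vvK ?eqxx //; lia.
Qed.

Lemma FAR_Xs q : FAR (pathN N'.+1) k (Xs x0p yp up q) = k + 2 * q.
Proof.
have [x0u x0y yu uu] := us_facts us_p.
have ds : forall i j, i <= N' -> j <= N' -> gdist (pathN N'.+1) (vv i) (vv j) = (i - j) + (j - i).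
  by move=> i j hi hj; rewrite gdist_path !vvK.
rewrite /FAR /Xs foldl_cat.
have s1 : size (@nil T) + size (Eb x0p up) <= k by rewrite /= su_p prednK.
have u1 : uniq (Eb x0p up ++ [::]) by rewrite cats0 /= x0u uu.
have [m1 [-> [_ hm1]]] := far_fill (pathN N'.+1) (@finset.set0 T) 0 s1 u1.
rewrite cats0 add0n /= su_p prednK // rev_cons -cats1.
have cm : forall x, x \in rev up ++ [:: x0p] -> x \in m1.
  by move=> x; rewrite mem_cat mem_rev inE => /orP[xu|/eqP ->]; apply: hm1; rewrite inE ?xu ?orbT ?eqxx.
suff H : forall q (m : {set T}) f, (forall x, x \in rev up ++ [:: x0p] -> x \in m) ->
  exists m', foldl (far_step (pathN N'.+1) k) (rev up ++ [:: x0p], m, f) (flatten (nseq q (Db x0p yp up))) = (rev up ++ [:: x0p], m', f + 2 * q).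
  by have [m' ->] := H q m1 k cm.
elim => [|{}q IH] m f hm; first by exists m; rewrite addn0.
rewrite (_ : flatten (nseq q.+1 _) = Db x0p yp up ++ flatten (nseq q (Db x0p yp up))) //.
rewrite foldl_cat /Db foldl_cat /Ob foldl_cons'.
rewrite (@far_victim _ k _ _ _ _ _ x0p); first last.
- move=> x; rewrite mem_cat mem_rev inE => /orP[/memup[i hi ->]|/eqP ->]; last by rewrite eqxx.
  move=> _; rewrite /yp /x0p !ds; lia.
- by rewrite mem_cat inE eqxx orbT.
- by rewrite mem_cat mem_rev negb_or yu inE eq_sym x0y.
- exact: hm.
- by rewrite size_cat size_rev su_p /= addn1 prednK.
- by rewrite cat_uniq rev_uniq uu /= mem_rev orbF andbT.
rewrite rem_cat_notin ?mem_rev // /= eqxx cats0.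
have u2 : uniq ([:: yp] ++ rev up) by rewrite /= mem_rev yu rev_uniq.
have [m2 [-> [h2a h2b]]] := far_hits k (pathN N'.+1) [set yp]%SET f.+1 u2.
rewrite revK.
rewrite (@far_victim _ k _ _ _ _ _ yp); first last.
- move=> x; rewrite mem_cat inE => /orP[/memup[i hi ->]|/eqP ->]; last by rewrite eqxx.
  move=> _; rewrite /yp /x0p !ds; lia.
- by rewrite mem_cat inE eqxx orbT.
- by rewrite mem_cat negb_or x0u inE x0y.
- move=> x; rewrite mem_cat inE => /orP[xu|/eqP ->]; first by apply: h2b; rewrite mem_rev.
  by apply: h2a; rewrite inE.
- by rewrite size_cat su_p /= addn1 prednK.
- by rewrite cat_uniq uu /= orbF andbT.
rewrite rem_cat_notin // /= eqxx cats0.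
have u3 : uniq ([:: x0p] ++ up) by rewrite /= x0u.
have [m3 [-> [h3a h3b]]] := far_hits k (pathN N'.+1) [set x0p]%SET f.+2 u3.
have hm3 : forall x, x \in rev up ++ [:: x0p] -> x \in m3.
  move=> x; rewrite mem_cat mem_rev inE => /orP[/h3b //|/eqP ->].
  by apply: h3a; rewrite inE.
have [m4 ->] := IH m3 f.+2 hm3.
by exists m4; congr (_, _, _); lia.
Qed.
End PathFar.


From mathcomp Require Import topology normedtype.
From mathcomp Require Import ring lra.
Import numFieldNormedType.Exports.
Local Open Scope ring_scope.
Local Open Scope classical_set_scope.

Lemma cvg_harm_lin (R : realType) (L c : R) :
  (fun n => ((L + c * harmonic n)%:E : \bar R)) @ \oo --> L%:E.
Proof.
apply/fine_cvgP; split; first exact: nearW.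
rewrite /comp /=.
have H : (fun n => c * harmonic n) @ \oo --> (c * 0 : R) by apply: cvgMl_tmp; exact: cvg_harmonic.
rewrite mulr0 in H.
have H2 : (fun _ : nat => L) @ \oo --> L by exact: cvg_cst.
have := cvgD H2 H; rewrite addr0; exact.
Qed.

Lemma squeeze_lemma (R : realType) (g : nat -> \bar R) (L c : R) (n0 : nat) :
  0 <= c ->
 (forall n, (n0 <= n)%N -> (0 < n)%N -> ((L - c * n%:R^-1)%:E <= g n <= (L + c * n%:R^-1)%:E)%E) ->
 g @ \oo --> L%:E.
Proof.
move=> c0 H.
apply: (@squeeze_cvge _ _ _ _ (fun n => (L + (- (2 * c)) * harmonic n)%:E) _
     (fun n => (L + (2 * c) * harmonic n)%:E)); last 2 first.
- exact: cvg_harm_lin.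
- exact: cvg_harm_lin.
near=> n.
have hn : (n0.+1 <= n)%N by near: n; exact: nbhs_infty_ge.
have /andP[h1 h2] := H n (ltnW hn) (leq_ltn_trans (leq0n _) hn).
have n0' : (0 < n)%N by apply: leq_ltn_trans (leq0n _) hn.
have hinv : c * n%:R^-1 <= 2 * c * harmonic n.
  rewrite /harmonic /= -mulrA mulrCA; apply: ler_wpM2l => //.
  rewrite -[_^-1]mul1r ler_pdivrMr ?ltr0n // mulrAC ler_pdivlMr ?ltr0n // mul1r.
  by rewrite -natrM ler_nat; lia.
apply/andP; split.
- apply: le_trans h1; rewrite lee_fin lerD2l mulNr lerN2 //.
- apply: le_trans h2 _; rewrite lee_fin lerD2l //.
Unshelve. all: end_near.
Qed.

Lemma ub_real (R : realFieldType) (K F a n : R) : 0 < K -> 0 < n ->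
  K * F <= K * a + (K - 1) * n + K -> (F - a) * n^-1 <= (1 - K^-1) + 1 * n^-1.
Proof.
move=> K0 n0 h.
have hK : K * K^-1 = 1 by rewrite mulfV // gt_eqF.
have hn : n * n^-1 = 1 by rewrite mulfV // gt_eqF.
have iK : 0 < K^-1 by rewrite invr_gt0.
have iN : 0 < n^-1 by rewrite invr_gt0.
nra.
Qed.

Lemma lb_real (R : realFieldType) (K F a n c : R) : 0 < K -> 0 < n ->
  (K - 1) * n + K * a <= K * F + c * K ->
  (1 - K^-1) - c * n^-1 <= (F - a) * n^-1.
Proof.
move=> K0 n0 h.
have hK : K * K^-1 = 1 by rewrite mulfV // gt_eqF.
have hn : n * n^-1 = 1 by rewrite mulfV // gt_eqF.
have iK : 0 < K^-1 by rewrite invr_gt0.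
have iN : 0 < n^-1 by rewrite invr_gt0.
nra.
Qed.

Section Final.
Variables (R : realType) (T : finType) (e : rel T) (k : nat) (A : seq T -> nat).
Hypothesis k0 : (0 < k)%N.
Hypothesis HA1 : forall I, (A I <= FWF k I)%N.
Hypothesis HA2 : forall I, (k * FWF k I <= k * A I + (k - 1) * size I + k)%N.
Hypothesis HA3 : forall n, exists I : seq T, [/\ size I = n, sorted (adj e) I & (FWF k I <= A I)%N].
Hypothesis HA4 : forall n, (k <= n)%N -> exists I : seq T,
  [/\ size I = n, sorted (adj e) I & ((k - 1) * n + k * A I <= k * FWF k I + 5 * k * k)%N].

Lemma MinAB0 n : MinAB R e (@FWF T k) A n = 0%E.
Proof.
apply/eqP; rewrite eq_le; apply/andP; split.
- have [I [sI rI hI]] := HA3 n.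
  have tI : size I == n by rewrite sI.
  rewrite /MinAB; apply: le_trans (bigmin_le_cond _ (j := Tuple tI) _ _) _ => /=; first exact: rI.
  rewrite lee_fin subr_le0 ler_nat; exact: hI.
- apply: le_bigmin => // t _; rewrite lee_fin subr_ge0 ler_nat; exact: HA1.
Qed.

Lemma rel_interval_gen : rel_interval R e (@FWF T k) A = (0%E, (1 - k%:R^-1)%:E).
Proof.
rewrite /rel_interval; congr pair.
  have -> : (fun n => (MinAB R e (@FWF T k) A n * (n%:R^-1)%:E)%E) = (fun _ => 0%E).
    by apply: funext => n; rewrite MinAB0 mul0e.
  exact: (cvg_limn_einf_sup (cvg_cst _)).1.
apply: (cvg_limn_einf_sup _).2.
apply: (@squeeze_lemma _ _ _ (5 * k%:R) k) => // n kn n0.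
have K0 : (0 : R) < k%:R by rewrite ltr0n.
have N0 : (0 : R) < n%:R by rewrite ltr0n.
have iN : (0 : R) <= n%:R^-1 by rewrite invr_ge0 ltW.
apply/andP; split.
- have [I [sI rI hI]] := HA4 kn.
  have tI : size I == n by rewrite sI.
  rewrite /MinAB; apply: le_trans (lee_wpmul2r _ (le_bigmax_cond _ (j := Tuple tI) _ _)); last 2 first.
  + by rewrite lee_fin.
  + exact: rI.
  rewrite /= -EFinM lee_fin; apply: lb_real => //.
  move: hI; rewrite -(ler_nat R) !natrD !natrM natrB // => h.
  have Hmax : (MaxAB R e (@FWF T k) A n <= (((1 - k%:R^-1) + 1 * n%:R^-1) * n%:R)%:E)%E.
    apply: bigmax_le; first exact: leNye.
    move=> t _; rewrite lee_fin -ler_pdivrMr //.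
    apply: ub_real => //.
    have := HA2 t; rewrite -(ler_nat R) !natrD !natrM natrB // size_tuple => h.
    by apply: le_trans h _.
  apply: le_trans (lee_wpmul2r _ Hmax) _; first by rewrite lee_fin.
  rewrite -EFinM lee_fin mulfK ?gt_eqF // lerD2l ler_wpM2r //.
  have : (1 : R) <= k%:R by rewrite ler1n.
  lra.
Qed.
End Final.


Unset Implicit Arguments.
Local Close Scope classical_set_scope.
Theorem theorem2 (R : realType) (k N : nat) :
  (1 <= k)%N -> (k.+1 <= N)%N ->
  [/\ rel_interval R (pathN N) (@FWF _ k) (@LRU _ k) = (0%E, (1 - k%:R^-1)%:E),
      rel_interval R (pathN N) (@FWF _ k) (@FAR _ (pathN N) k) = (0%E, (1 - k%:R^-1)%:E)
    & forall (T : finType) (e : rel T),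
        symmetric e -> irreflexive e ->
        (exists s : seq T, [/\ size s = k.+1, uniq s & path.sorted e s]) ->
        rel_interval R e (@FWF T k) (@LRU T k) = (0%E, (1 - k%:R^-1)%:E)].
Proof.
move=> k1 kN.
have gen : forall (T : finType) (e : rel T), symmetric e ->
    (exists s : seq T, [/\ size s = k.+1, uniq s & path.sorted e s]) ->
    rel_interval R e (@FWF T k) (@LRU T k) = (0%E, (1 - k%:R^-1)%:E).
  move=> T e esym [s [ss us es]].
  case: s ss us es => [|x0 t] // [st] us es.
  case/lastP: t st us es => [|u y]; first by move=> k0; rewrite -k0 in k1.
  rewrite size_rcons => -[su] us es.
  have su' : size u = k.-1 by rewrite -su.
  apply: rel_interval_gen => //.
  - by move=> I; have [] := lru_bounds k1 I.
  - by move=> I; have [] := lru_bounds k1 I.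
  - exact: (const_seq k e (LRU_ge1 k x0)).
  - exact: (lower_gen k1 su' us esym es (LRU_cat k) (LRU_Xs k1 su' us)).
case: N kN => [|N'] // kN'.
have kN : (k <= N')%N by [].
have esym : symmetric (pathN N'.+1) by move=> a b; rewrite /pathN orbC.
split.
- apply: gen => //.
  exists (x0p N' :: rcons (up N' k) (yp N' k)); split.
  + by rewrite /= size_rcons su_p prednK.
  + exact: us_p.
  + exact: es_p.
- have su' := su_p N' k.
  have us := @us_p N' k k1 kN.
  have es := @es_p N' k k1 kN.
  apply: rel_interval_gen => //.
  + by move=> I; have [] := far_bounds k1 (pathN N'.+1) I.
  + by move=> I; have [] := far_bounds k1 (pathN N'.+1) I.
  + exact: (const_seq k (pathN N'.+1) (FAR_ge1 k (pathN N'.+1) (x0p N'))).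
  + exact: (lower_gen k1 su' us esym es (FAR_cat k (pathN N'.+1)) (@FAR_Xs N' k k1 kN)).
- by move=> T e esy _; apply: gen.
Qed.
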